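(* For every integer $s$, the polynomial $F_s(t)= t^4 + (4s^3 - 4s^2 + 8s - 4)t^3 + (-6s^2 - 6)t^2 + 4t + 1$ is irreducible in $\mathbb{Q}[t]$. *)

(* Defs.v *)
From HB Require Import structures.
From mathcomp Require Import all_boot all_order all_algebra.
Set Implicit Arguments. Unset Strict Implicit. Unset Printing Implicit Defensive.
Import Order.TTheory GRing.Theory Num.Theory.
Local Open Scope ring_scope.

Definition Fs (s : int) : {poly rat} :=
  let q : rat := s%:~R in
  'X^4 + ((4 * q ^+ 3 - 4 * q ^+ 2 + 8 * q - 4)%:P) * 'X^3
       + ((- 6 * q ^+ 2 - 6)%:P) * 'X^2 + 4%:P * 'X + 1.

(* Main.v *)
From HB Require Import structures.
From mathcomp Require Import all_boot all_order all_algebra.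
From mathcomp Require Import zify ring.
Require Import Defs.
Import Order.TTheory GRing.Theory Num.Theory.
Local Open Scope ring_scope.
Definition aa (s : int) : int := 4 * s ^+ 3 - 4 * s ^+ 2 + 8 * s - 4.
Definition bb (s : int) : int := - 6 * s ^+ 2 - 6.
Definition G (s : int) : {poly int} := Poly [:: 1; 4; bb s; aa s; 1].
Lemma FsE s : Fs s = map_poly (intr : int -> rat) (G s).
Proof.
apply/polyP => i; rewrite coef_map coef_Poly /Fs !coefE.
case: i => [|[|[|[|[|i]]]]] /=.
all: rewrite ?nth_nil /aa /bb; ring.
Qed.
Lemma u (c d : int) : c * d = 1 -> (c = 1 /\ d = 1) \/ (c = -1 /\ d = -1).
Proof. move=> h. have:= intUnitRing.unitzPl (etrans (mulrC _ _) h).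
have:= intUnitRing.unitzPl h. rewrite !qualifE /= => /orP[]/eqP E1 /orP[]/eqP E2; subst; lia. Qed.
Lemma q1 (s : int) : 4*s^+3 - 4*s^+2 + 8*s - 4 = 4 -> s = 1.
Proof. nia. Qed.
Lemma q0 (s : int) : 4*s^+3 - 4*s^+2 + 8*s - 4 = -4 -> s = 0.
Proof. nia. Qed.
Lemma q3 (s : int) : 4*s^+3 - 10*s^+2 + 8*s - 4 = 0 -> False.
Proof. have: (s <= 0 \/ s = 1 \/ s = 2 \/ 3 <= s)%R by lia.
case=>[|[|[|]]] h; try subst; nia. Qed.
Lemma q4 (s : int) : -4*s^+3 - 2*s^+2 - 8*s - 4 = 0 -> False.
Proof. have: (s <= -1 \/ s = 0 \/  0 <= s)%R by lia.
case=>[|[|]] h; try subst; nia. Qed.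

Lemma nsq (x k : int) : (k = 8 \/ k = 18) -> x^+2 = k -> False.
Proof.
have: (x <= -5 \/ -4 <= x <= -3 \/ -2 <= x <= 2 \/ 3 <= x <= 4 \/ 5 <= x) by lia.
case=> [|[|[|[|]]]] h; case=> ->; nia.
Qed.
Lemma case2 s (p r : {poly int}) : G s = p * r -> size p = 2%N -> size r = 4%N -> False.
Proof.
move=> E sp sr.
have ec k : (G s)`_k = \sum_(j < k.+1) p`_j * r`_(k - j) by rewrite E coefM.
have e0 := ec 0%N; have e1 := ec 1%N; have e2 := ec 2%N; have e3 := ec 3%N; have e4 := ec 4%N.
rewrite /G !coef_Poly /= in e0 e1 e2 e3 e4.
rewrite !big_ord_recr big_ord0 /= in e0 e1 e2 e3 e4.
have p2 : p`_2 = 0 by rewrite nth_default // sp.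
have p3 : p`_3 = 0 by rewrite nth_default // sp.
have p4 : p`_4 = 0 by rewrite nth_default // sp.
have r4 : r`_4 = 0 by rewrite nth_default // sr.
rewrite ?p2 ?p3 ?p4 ?r4 in e0 e1 e2 e3 e4.
rewrite !big_ord0 ?(subSS, subn0) ?mul0r ?mulr0 ?add0r ?addr0 in e0 e1 e2 e3 e4.
rewrite /aa /bb in e2 e3.
move: e0 e1 e2 e3 e4; move: (p`_0) (p`_1) (r`_0) (r`_1) (r`_2) (r`_3) => c0 c1 d0 d1 d2 d3.
move=> e0 e1 e2 e3 e4.
have [[??]|[??]] := u _ _ (esym e0); have [[??]|[??]] := u _ _ (esym e4); subst.
all: first [apply: (q3 s); lia | apply: (q4 s); lia].
Qed.

Lemma case3 s (p r : {poly int}) : G s = p * r -> size p = 3%N -> size r = 3%N -> False.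
Proof.
move=> E sp sr.
have ec k : (G s)`_k = \sum_(j < k.+1) p`_j * r`_(k - j) by rewrite E coefM.
have e0 := ec 0%N; have e1 := ec 1%N; have e2 := ec 2%N; have e3 := ec 3%N; have e4 := ec 4%N.
rewrite /G !coef_Poly /= in e0 e1 e2 e3 e4.
rewrite !big_ord_recr /= in e0 e1 e2 e3 e4.
have p3 : p`_3 = 0 by rewrite nth_default // sp.
have p4 : p`_4 = 0 by rewrite nth_default // sp.
have r4 : r`_4 = 0 by rewrite nth_default // sr.
have r3 : r`_3 = 0 by rewrite nth_default // sr.
rewrite ?p3 ?p4 ?r4 ?r3 in e0 e1 e2 e3 e4.
rewrite !big_ord0 ?(subSS, subn0) ?mul0r ?mulr0 ?add0r ?addr0 in e0 e1 e2 e3 e4.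
rewrite /aa /bb in e2 e3.
move: e0 e1 e2 e3 e4; move: (p`_0) (p`_1) (p`_2) (r`_0) (r`_1) (r`_2) => c0 c1 c2 d0 d1 d2.
move=> e0 e1 e2 e3 e4.
have [[??]|[??]] := u _ _ (esym e0); have [[??]|[??]] := u _ _ (esym e4); subst.
all: first [have hs: s = 1 by apply: q1; lia | have hs : s = 0 by apply: q0; lia].
all: subst s.
all: first [have hd: d1 = 4 - c1 by lia | have hd: d1 = -4 - c1 by lia]; subst d1.
all: first [apply: (nsq (c1-2) 18); [by right|lia] | apply: (nsq (c1+2) 18); [by right|lia]
  | apply: (nsq (c1-2) 8); [by left|lia] | apply: (nsq (c1+2) 8); [by left|lia]].
Qed.

Lemma G0 s : size (G s) = 5%N.
Proof. by rewrite /G (@PolyK _ 0) //= oner_eq0. Qed.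

Lemma core s (p r : {poly int}) : G s = p * r -> (size p == 1)%N || (size r == 1)%N.
Proof.
move=> E.
have p0 : p != 0 by apply/eqP => h; move: (G0 s); rewrite E h mul0r size_poly0.
have r0 : r != 0 by apply/eqP => h; move: (G0 s); rewrite E h mulr0 size_poly0.
have hs : (size p + size r = 6)%N.
  move: (G0 s); rewrite E size_mul // -subn1 => h.
by move: h; case: (size p + size r)%N => // n; rewrite subSS subn0 => ->.
have sp : (size p != 0)%N by rewrite size_poly_eq0.
have sr : (size r != 0)%N by rewrite size_poly_eq0.
apply/negPn/negP; rewrite negb_or => /andP[h1 h2].
have : (size p = 2 \/ size p = 3 \/ size p = 4)%N by lia.
case=> [|[|]] h.
- by apply: (@case2 s p r E) => //; lia.
- by apply: (@case3 s p r E) => //; lia.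
- by apply: (@case2 s r p); [rewrite mulrC | lia | lia].
Qed.

Theorem mainTheorem4 (s : int) : irreducible_poly (Fs s).
Proof.
rewrite FsE; split.
  by rewrite size_rat_int_poly G0.
move=> q q1 /dvdpP_rat_int [p1 [a a0 qE] [r rE]].
have := core _ _ _ rE.
have sq : size q = size p1 by rewrite qE size_scale // size_rat_int_poly.
rewrite -sq (negbTE q1) /= => /eqP r1.
rewrite -dvdp_size_eqp; last first.
  by rewrite qE dvdpZl // rE rmorphM /= dvdp_mulr.
rewrite sq size_rat_int_poly rE size_mul ?r1 ?addn1 //.
all: apply/eqP => h.
all: by move: (G0 s); rewrite rE h ?mul0r ?mulr0 size_poly0.
Qed.
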